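(* Let $2 \le t < k < v$ and let $(X,\mathcal{B})$ be a $t$-$(v,k,1)$-design. Let $B = \{x_1,\dots,x_k\} \in \mathcal{B}$. Then the cutsets for $B$ are exactly the sets $\mathcal{C}_1,\dots,\mathcal{C}_k$, where $\mathcal{C}_j = \{B' \in \mathcal{B}\setminus\{B\} : x_j \in B'\}$.
   Context: A $t$-$(v,k,\lambda)$-design is a set $X$ of $v$ points together with a collection $\mathcal{B}$ of $k$-subsets of $X$ (blocks) such that every $t$-subset of $X$ lies in exactly $\lambda$ blocks. For a fixed block $B$, a repair set for $B$ is a subset $\mathcal{P}\subseteq \mathcal{B}\setminus\{B\}$ with $B \subseteq \bigcup_{B'\in\mathcal{P}} B'$. Each block of $\mathcal{B}\setminus\{B\}$ is either available or not; a repair set is available if all its blocks are available. A cutset for $B$ is a subset $\mathcal{B}'\subseteq\mathcal{B}\setminus\{B\}$, minimal with respect to inclusion, such that if every block in $\mathcal{B}'$ is unavailable then no available repair set for $B$ exists (i.e., $(\mathcal{B}\setminus\{B\})\setminus\mathcal{B}'$ contains no repair set for $B$). *)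

(* Defs.v *)
From mathcomp Require Import all_boot.
Set Implicit Arguments. Unset Strict Implicit. Unset Printing Implicit Defensive.

(* A t-(v,k,lambda) design on the point set T (v = #|T|) with block set D. *)
Definition is_design (T : finType) (t k lambda : nat) (D : {set {set T}}) : Prop :=
  (forall B, B \in D -> #|B| = k) /\
  (forall S : {set T}, #|S| = t -> #|[set B in D | S \subset B]| = lambda).

Definition repair_set (T : finType) (D : {set {set T}}) (B : {set T})
    (P : {set {set T}}) : Prop :=
  P \subset D :\ B /\ B \subset cover P.

Definition kills (T : finType) (D : {set {set T}}) (B : {set T})
    (C : {set {set T}}) : Prop :=
  ~ exists P : {set {set T}}, P \subset (D :\ B) :\: C /\ repair_set D B P.

Definition cutset (T : finType) (D : {set {set T}}) (B : {set T})
    (C : {set {set T}}) : Prop :=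
  C \subset D :\ B /\ kills D B C /\
  (forall C' : {set {set T}}, C' \subset D :\ B -> kills D B C' -> C' \subset C -> C' = C).

(* Main.v *)
Require Import Defs.
From mathcomp Require Import all_boot.
From mathcomp Require Import zify.

Lemma ar1 a b c : a = b - c -> a < b -> 0 < c.
Proof. lia. Qed.
Lemma ar2 t k a b : t < k -> k = 1 + a -> a = 1 + b -> t - 2 <= b.
Proof. lia. Qed.
Lemma ar3 t : 1 < t -> 1 + (1 + (t - 2)) = t.
Proof. lia. Qed.

Section Aux.
Variables (T : finType) (t k : nat) (D : {set {set T}}).

Lemma subset_of_size (A : {set T}) n : n <= #|A| -> exists2 W : {set T}, W \subset A & #|W| = n.
Proof.
move/card_geqP=> [s [us ss sA]].
exists [set x in s]; first by apply/subsetP=> x; rewrite inE => /sA.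
by rewrite cardsE (card_uniqP us).
Qed.

Lemma des_unique (S B1 B2 : {set T}) : is_design t k 1 D -> #|S| = t ->
  B1 \in D -> B2 \in D -> S \subset B1 -> S \subset B2 -> B1 = B2.
Proof.
move=> [_ H] hS h1 h2 s1 s2.
have /eqP /cards1P [b hb] := H S hS.
have : B1 \in [set B in D | S \subset B] by rewrite inE h1 s1.
have : B2 \in [set B in D | S \subset B] by rewrite inE h2 s2.
by rewrite hb !inE => /eqP -> /eqP ->.
Qed.

Lemma des_exists (S : {set T}) : is_design t k 1 D -> #|S| = t ->
  exists2 B', B' \in D & S \subset B'.
Proof.
move=> [_ H] hS.
have : 0 < #|[set B in D | S \subset B]| by rewrite H.
move/card_gt0P=> [b]; rewrite inE => /andP [] ?; by exists b.
Qed.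

Lemma sep (B : {set T}) x y : 2 <= t -> t < k -> k < #|T| ->
  is_design t k 1 D -> B \in D -> x \in B -> y \in B -> x != y ->
  exists B', [/\ B' \in D :\ B, x \in B' & y \notin B'].
Proof.
move=> t2 tk kT Hd BD xB yB xy.
have cB : #|B| = k by case: Hd => H _; apply: H.
have [z zB] : exists z, z \notin B.
  have : 0 < #|~: B|.
    have := cardsCs B; rewrite cB => e; exact: ar1 e kT.
  by move/card_gt0P=> [z]; rewrite inE => ?; exists z.
have hW : t - 2 <= #|B :\ x :\ y|.
  have e1 := cardsD1 x B; have e2 := cardsD1 y (B :\ x).
  rewrite xB cB in e1; rewrite in_setD1 eq_sym xy yB /= in e2. exact: ar2 tk e1 e2.
have [W WB cW] := @subset_of_size _ _ hW.
have xW : x \notin W.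
  apply/negP=> /(subsetP WB); by rewrite !inE eqxx andbF.
have yW : y \notin W.
  apply/negP=> /(subsetP WB); by rewrite !inE eqxx.
have zW : z \notin W.
  apply/negP=> /(subsetP WB); rewrite !inE; by rewrite (negbTE zB) !andbF.
have xz : x != z by apply/eqP=> e; rewrite -e xB in zB.
have cS : #|x |: (z |: W)| = t.
  rewrite cardsU1 cardsU1 !inE negb_or xz xW zW cW /=. exact: ar3.
have [B' B'D sB'] := des_exists _ Hd cS.
exists B'; split.
- rewrite !inE B'D andbT; apply/eqP=> e.
  have : z \in B' by apply: (subsetP sB'); rewrite !inE eqxx orbT.
  by rewrite e (negbTE zB).
- by apply: (subsetP sB'); rewrite !inE eqxx.
- apply/negP=> yB'.
  have cS' : #|y |: (x |: W)| = t.
    rewrite cardsU1 cardsU1 !inE negb_or eq_sym xy xW yW cW /=. exact: ar3.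
  have s1 : y |: (x |: W) \subset B.
    apply/subsetP=> u; rewrite !inE => /or3P [/eqP->|/eqP->|/(subsetP WB)] //.
    by rewrite !inE => /andP [_ /andP [_ ->]].
  have s2 : y |: (x |: W) \subset B'.
    apply/subsetP=> u; rewrite !inE => /or3P [/eqP->|/eqP->|uW] //.
    - by apply: (subsetP sB'); rewrite !inE eqxx.
    - by apply: (subsetP sB'); rewrite !inE uW !orbT.
  have e := des_unique _ _ _ Hd cS' BD B'D s1 s2.
  have : z \in B' by apply: (subsetP sB'); rewrite !inE eqxx orbT.
  by rewrite -e (negbTE zB).
Qed.

Lemma kills_iff (B : {set T}) (C : {set {set T}}) :
  kills D B C <-> exists2 x, x \in B & [set B' in D :\ B | x \in B'] \subset C.
Proof.
split.
- move=> K.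
  case: (boolP [exists x in B, [set B' in D :\ B | x \in B'] \subset C]).
    by move/existsP=> [x /andP [xB sub]]; exists x.
  move=> hn; exfalso; apply: K.
  exists ((D :\ B) :\: C); split => //; split; first exact: subsetDl.
  apply/subsetP=> x xB.
  have : ~~ ([set B' in D :\ B | x \in B'] \subset C).
    apply/negP=> s; move/negP: hn; apply; apply/existsP; exists x; by rewrite xB.
  move/subsetPn=> [b]; rewrite inE => /andP [bD xb] bC.
  apply/bigcupP; exists b => //; by rewrite inE bC.
- move=> [x xB sub] [P [PC [_ Bc]]].
  have /bigcupP [b bP xb] := subsetP Bc x xB.
  have := subsetP PC b bP; rewrite inE => /andP [bC bD].
  have : b \in C by apply: (subsetP sub); rewrite inE bD xb.
  by rewrite (negbTE bC).
Qed.

End Aux.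

Theorem mainTheorem7 (T : finType) (t k : nat) (D : {set {set T}}) (B : {set T}) :
  2 <= t -> t < k -> k < #|T| ->
  is_design t k 1 D -> B \in D ->
  forall C : {set {set T}},
    cutset D B C <-> exists2 x, x \in B & C = [set B' in D :\ B | x \in B'].
Proof.
move=> t2 tk kT Hd BD C; split.
- move=> [sC [K M]].
  have [x xB sub] := (@kills_iff _ D B C).1 K.
  exists x => //; symmetry; apply: M => //.
  + apply/subsetP=> b; by rewrite inE => /andP [].
  + by apply/kills_iff; exists x.
- move=> [x xB ->]; split; [|split].
  + apply/subsetP=> b; by rewrite inE => /andP [].
  + by apply/kills_iff; exists x.
  + move=> C' sC' K' sub.
    have [y yB suby] := (@kills_iff _ D B C').1 K'.
    case: (eqVneq x y) => [exy|nxy].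
      by subst y; apply/eqP; rewrite eqEsubset sub suby.
    have nyx : y != x by rewrite eq_sym.
    have [b [bD yb xb]] := @sep _ t k D B y x t2 tk kT Hd BD yB xB nyx.
    have : b \in [set B' in D :\ B | x \in B'].
      apply: (subsetP sub); apply: (subsetP suby); by rewrite inE bD yb.
    by rewrite inE (negbTE xb) andbF.
Qed.
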